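(* Let $\mathcal A$ be a well-structured abstract domain with abstraction function $\alpha:\mathcal Q\to\mathcal A$. For any $R_1,R_2\subseteq\mathcal D(\mathcal H_V)$, if $\alpha_s(R_1)=\alpha_s(R_2)$ then $\alpha(R_1)=\alpha(R_2)$. Consequently $\alpha=\alpha\circ\gamma_s\circ\alpha_s$.
   Context: Fix a finite set $V$ of quantum variables, each a qubit with state space $\mathcal H_q\cong\mathbb C^2$; $\mathcal H_V=\bigotimes_{q\in V}\mathcal H_q$. $\mathcal D(\mathcal H_V)$ is the set of partial density operators on $\mathcal H_V$ (positive operators of trace at most $1$); $\lceil\rho\rceil$ denotes the support (image space) of $\rho$. The concrete domain is $\mathcal Q=2^{\mathcal D(\mathcal H_V)}$ ordered by inclusion. A pair of monotone maps $(\alpha,\gamma)$ between posets is a Galois connection if $c\le\gamma(a)\iff\alpha(c)\le a$, and a Galois embedding if moreover $\alpha\circ\gamma=\mathrm{id}$. A complete lattice $(\mathcal A,\le_{\mathcal A},\vee,\wedge,\bot,\top)$ with monotone $\alpha:\mathcal Q\to\mathcal A$, $\gamma:\mathcal A\to\mathcal Q$ is a well-structured abstract domain if (a) $(\alpha,\gamma)$ is a Galois embedding, and (b) for any family $\rho_i\in\mathcal D(\mathcal H_V)$ and reals $x_i>0$ with $\sum_i x_i\rho_i\in\mathcal D(\mathcal H_V)$, $\alpha(\sum_i x_i\rho_i)=\bigvee_i\alpha(\rho_i)$, where $\alpha(\rho)=\alpha(\{\rho\})$. The subspace domain $\mathcal S(\mathcal H_V)$ is the set of all subspaces of $\mathcal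 H_V$ ordered by inclusion, with join $P\vee Q=\mathrm{span}(P\cup Q)$ and meet $\cap$; its functions are $\gamma_s(P)=\{\rho\in\mathcal D(\mathcal H_V):\lceil\rho\rceil\subseteq P\}$ and $\alpha_s(R)=\bigvee\{\lceil\rho\rceil:\rho\in R\}$. *)

(* Defs.v *)
From HB Require Import structures.
From mathcomp Require Import all_boot all_order all_algebra.
From mathcomp Require Import boolp classical_sets.
Set Implicit Arguments. Unset Strict Implicit. Unset Printing Implicit Defensive.
Import Order.TTheory GRing.Theory Num.Theory.
Local Open Scope ring_scope.
Local Open Scope classical_set_scope.

(* Scalars: an arbitrary numeric algebraically closed field C (e.g. the
   complex numbers).  A system of n qubits has state space H_V = C^(2^n).
   Vectors are row vectors, an operator A acts by v |-> v *m A. *)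
Notation dimV n := (2 ^ n)%N.

Definition psd (C : numClosedFieldType) (N : nat) (A : 'M[C]_N) : Prop :=
  forall v : 'rV[C]_N, 0 <= (v *m A *m (map_mx Num.conj v)^T) 0 0.

Definition is_pdo (C : numClosedFieldType) (N : nat) (A : 'M[C]_N) : Prop :=
  psd A /\ \tr A <= 1.

Definition dens (C : numClosedFieldType) (n : nat) : Type :=
  {A : 'M[C]_(dimV n) | is_pdo A}.

(* support (image space) of an operator: the span of its rows, i.e. the
   image of v |-> v *m A *)
Definition supp (C : numClosedFieldType) (N : nat) (A : 'M[C]_N)
  : {vspace 'rV[C]_N} := (\sum_(i < N) <[row i A]>)%VS.

(* subspace domain S(H_V) = {vspace 'rV_(2^n)}, ordered by inclusion *)
(* alpha_s R = join (span) of the supports of the elements of R *)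
Definition alpha_s (C : numClosedFieldType) (n : nat) (R : set (dens C n))
  : {vspace 'rV[C]_(dimV n)} :=
  xget 0%VS [set P | (forall r, R r -> (supp (sval r) <= P)%VS) /\
                     (forall Q, (forall r, R r -> (supp (sval r) <= Q)%VS) ->
                                (P <= Q)%VS)].

Definition gamma_s (C : numClosedFieldType) (n : nat)
  (P : {vspace 'rV[C]_(dimV n)}) : set (dens C n) :=
  [set r | (supp (sval r) <= P)%VS].

Definition complete_lattice (A : Type) (le : A -> A -> Prop)
  (sup : set A -> A) : Prop :=
  [/\ (forall a, le a a),
      (forall a b, le a b -> le b a -> a = b),
      (forall a b c, le a b -> le b c -> le a c),
      (forall (S : set A) a, S a -> le a (sup S)) &
      (forall (S : set A) b, (forall a, S a -> le a b) -> le (sup S) b)].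

(* well-structured abstract domain; the concrete domain Q = set (dens C n)
   is ordered by inclusion *)
Definition well_structured (C : numClosedFieldType) (n : nat) (A : Type)
  (le : A -> A -> Prop) (sup : set A -> A)
  (alpha : set (dens C n) -> A) (gamma : A -> set (dens C n)) : Prop :=
  complete_lattice le sup /\
    [/\
      (forall c1 c2, c1 `<=` c2 -> le (alpha c1) (alpha c2)),
      (forall a1 a2, le a1 a2 -> gamma a1 `<=` gamma a2),
      (forall c a, c `<=` gamma a <-> le (alpha c) a) &
      (forall a, alpha (gamma a) = a)] /\
      ((* condition (b), for finite families rho_0..rho_(k-1), x_i > 0 *)
      (forall (k : nat) (rho : 'I_k -> dens C n) (x : 'I_k -> C)
              (sigma : dens C n),
          (forall i, 0 < x i) ->
          sval sigma = \sum_(i < k) x i *: sval (rho i) ->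
          alpha [set sigma] = sup [set alpha [set rho i] | i in setT])).

(* Main.v *)
Require Import Defs.
From HB Require Import structures.
From mathcomp Require Import all_boot all_order all_algebra.
From mathcomp Require Import boolp classical_sets.
From mathcomp Require Import ring.
Set Implicit Arguments. Unset Strict Implicit. Unset Printing Implicit Defensive.
Import Order.TTheory GRing.Theory Num.Theory.
Local Open Scope ring_scope.
Local Open Scope classical_set_scope.

Section LA.
Variable C : numClosedFieldType.

Definition ct m k (M : 'M[C]_(m,k)) : 'M[C]_(k,m) := (map_mx Num.conj M)^T.

Lemma ct_mul m k p (A : 'M[C]_(m,k)) (B : 'M[C]_(k,p)) : ct (A *m B) = ct B *m ct A.
Proof. by rewrite /ct map_mxM trmx_mul. Qed.

Lemma ctK m k (A : 'M[C]_(m,k)) : ct (ct A) = A.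
Proof. by apply/matrixP=> i j; rewrite !mxE conjCK. Qed.

Lemma ctD m k (A B : 'M[C]_(m,k)) : ct (A + B) = ct A + ct B.
Proof. by apply/matrixP=> i j; rewrite !mxE rmorphD. Qed.

Lemma ctZ m k a (A : 'M[C]_(m,k)) : ct (a *: A) = a^* *: ct A.
Proof. by apply/matrixP=> i j; rewrite !mxE rmorphM. Qed.

Lemma ct_delta k (j : 'I_k) : ct (delta_mx (0 : 'I_1) j) = delta_mx j (0 : 'I_1).
Proof. by apply/matrixP=> a b; rewrite !mxE (rmorph_nat Num.conj) andbC. Qed.

Variable N : nat.
Definition fm (A : 'M[C]_N) (u w : 'rV[C]_N) : C := (u *m A *m ct w) 0 0.

Lemma fmDl A u v w : fm A (u + v) w = fm A u w + fm A v w.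
Proof. by rewrite /fm !mulmxDl mxE. Qed.
Lemma fmZl A a u w : fm A (a *: u) w = a * fm A u w.
Proof. by rewrite /fm -!scalemxAl mxE. Qed.
Lemma fmDr A u v w : fm A u (v + w) = fm A u v + fm A u w.
Proof. by rewrite /fm ctD mulmxDr mxE. Qed.
Lemma fmZr A a u w : fm A u (a *: w) = a^* * fm A u w.
Proof. by rewrite /fm ctZ -scalemxAr mxE. Qed.
Lemma fmDm A B u w : fm (A + B) u w = fm A u w + fm B u w.
Proof. by rewrite /fm mulmxDr mulmxDl mxE. Qed.
Lemma fmZm A a u w : fm (a *: A) u w = a * fm A u w.
Proof. by rewrite /fm -scalemxAr -scalemxAl mxE. Qed.
Lemma fmNm A u w : fm (- A) u w = - fm A u w.
Proof. by rewrite -scaleN1r fmZm mulN1r. Qed.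
Lemma fm_sum k (F : 'I_k -> 'M[C]_N) u w :
  fm (\sum_(i < k) F i) u w = \sum_(i < k) fm (F i) u w.
Proof.
elim/big_rec2: _ => [|i y1 y2 _ <-]; first by rewrite /fm mulmx0 mul0mx mxE.
by rewrite fmDm.
Qed.
Lemma fm_e A i j : fm A (delta_mx 0 i) (delta_mx 0 j) = A i j.
Proof. by rewrite /fm ct_delta -rowE -colE !mxE. Qed.
Lemma fm0l A w : fm A 0 w = 0.
Proof. by rewrite /fm !mul0mx mxE. Qed.


Lemma herm_aux (p q P Q : C) : P + Q = p + q -> P - Q = q - p -> q = P.
Proof.
move=> H1 H2.
have : P *+ 2 = q *+ 2.
  transitivity ((P + Q) + (P - Q)); first ring.
  rewrite H1 H2; ring.
move/eqP; rewrite -subr_eq0 -mulrnBl mulrn_eq0 /= subr_eq0 => /eqP. done.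
Qed.

Lemma fm_real A x : psd A -> (fm A x x)^* = fm A x x.
Proof. by move=> pA; apply/conj_Creal/ger0_real/pA. Qed.

Lemma fm_sym_real A u w : psd A -> (fm A u w + fm A w u)^* = fm A u w + fm A w u.
Proof.
move=> pA; have := fm_real (u + w) pA.
rewrite !fmDl !fmDr !rmorphD /= !(fm_real _ pA) => E.
have : fm A u u + fm A w w + ((fm A u w)^* + (fm A w u)^*) =
       fm A u u + fm A w w + (fm A u w + fm A w u).
  by transitivity (fm A u u + (fm A u w)^* + ((fm A w u)^* + fm A w w)); [ring| rewrite E; ring].
by move/addrI.
Qed.

Lemma fm_herm A u w : psd A -> fm A w u = (fm A u w)^*.
Proof.
move=> pA; apply: (@herm_aux (fm A u w) (fm A w u) ((fm A u w)^*) ((fm A w u)^*)).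
  by have := fm_sym_real u w pA; rewrite rmorphD.
have := fm_sym_real u ('i *: w) pA.
rewrite fmZl fmZr conjCi !rmorphD /= !rmorphM /= !rmorphN /= conjCi opprK.
move=> E; apply: (mulfI (neq0Ci C)).
transitivity ('i * (fm A u w)^* + - 'i * (fm A w u)^*); first ring.
by rewrite E; ring.
Qed.

Lemma fm_quad A u w s : psd A ->
  0 <= fm A u u + s^* * fm A u w + s * (fm A u w)^* + s * s^* * fm A w w.
Proof.
move=> pA; have := pA (u + s *: w).
rewrite -/(fm _ _ _) fmDl !fmDr !fmZl !fmZr (fm_herm u w pA).
suff -> : fm A u u + s^* * fm A u w + (s * (fm A u w)^* + s * (s^* * fm A w w)) =
  fm A u u + s^* * fm A u w + s * (fm A u w)^* + s * s^* * fm A w w by [].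
ring.
Qed.

Lemma CS A u w : psd A -> `|fm A u w| ^+ 2 <= fm A u u * fm A w w.
Proof.
move=> pA; rewrite normCK.
set a := fm A u u; set b := fm A w w; set c := fm A u w.
have a0 : 0 <= a by apply: pA.
have b0 : 0 <= b by apply: pA.
have ar : a^* = a by apply: fm_real.
have br : b^* = b by apply: fm_real.
have [bz|bnz] := eqVneq b 0.
  rewrite bz mulr0.
  have [cz|cnz] := eqVneq c 0; first by rewrite cz mul0r.
  exfalso.
  have c'nz : c^* != 0 by rewrite conjC_eq0.
  have := fm_quad u w (- (a + 1) / (2 * c^*)) pA.
  rewrite -/a -/b -/c bz mulr0 addr0.
  rewrite rmorphM /= fmorphV /= rmorphM /= !rmorphN /= rmorphD /= ar conjCK.
  rewrite (rmorph_nat Num.conj 2) rmorph1.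
  have -> : a + - (a + 1) / (2 * c) * c + - (a + 1) / (2 * c^*) * c^* = -1.
    by field; rewrite c'nz cnz.
  by rewrite oppr_ge0 ler10.
have bp : 0 < b by rewrite lt_def bnz.
have := fm_quad u w (- c / b) pA.
rewrite -/a -/b -/c rmorphM /= fmorphV /= rmorphN /= br.
have -> : a + - c^* / b * c + - c / b * c^* + - c / b * (- c^* / b) * b = a - c * c^* / b.
  by field.
by rewrite subr_ge0 ler_pdivrMr.
Qed.

Lemma herm_mx (A : 'M[C]_N) : psd A -> ct A = A.
Proof.
move=> pA; apply/matrixP=> i j; rewrite !mxE -!fm_e.
by rewrite (fm_herm _ _ pA) conjCK.
Qed.

Lemma fm_kernel (A : 'M[C]_N) z : psd A -> fm A z z = 0 -> A *m ct z = 0.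
Proof.
move=> pA z0; apply/matrixP=> k j; rewrite (ord1 j) [RHS]mxE.
have -> : (A *m ct z) k 0 = fm A (delta_mx 0 k) z.
  by rewrite /fm -mulmxA -rowE [RHS]mxE.
have := CS (delta_mx 0 k) z pA; rewrite z0 mulr0 => H.
have : `|fm A (delta_mx 0 k) z| ^+ 2 == 0.
  by rewrite eq_le H exprn_ge0 ?normr_ge0.
by rewrite sqrf_eq0 normr_eq0 => /eqP.
Qed.

Lemma psd_tr (A : 'M[C]_N) : psd A -> 0 <= \tr A.
Proof.
move=> pA; rewrite /mxtrace; apply: sumr_ge0 => i _.
by rewrite -fm_e; apply: pA.
Qed.

Lemma ct_mulherm (A : 'M[C]_N) (y : 'rV[C]_N) : psd A -> ct (y *m A) = A *m ct y.
Proof. by move=> pA; rewrite ct_mul herm_mx. Qed.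

Lemma psdD (A B : 'M[C]_N) : psd A -> psd B -> psd (A + B).
Proof. by move=> pA pB v; rewrite -/(fm _ _ _) fmDm addr_ge0 //; [apply: pA|apply: pB]. Qed.

Lemma psdZ (A : 'M[C]_N) a : 0 <= a -> psd A -> psd (a *: A).
Proof. by move=> a0 pA v; rewrite -/(fm _ _ _) fmZm mulr_ge0 //; apply: pA. Qed.

Lemma psd_sum k (F : 'I_k -> 'M[C]_N) : (forall i, psd (F i)) -> psd (\sum_(i < k) F i).
Proof.
by move=> pF v; rewrite -/(fm _ _ _) fm_sum sumr_ge0 // => i _; apply: pF.
Qed.

Lemma ct_tstar m k (M : 'M[C]_(m,k)) : ct M = map_mx Num.conj (M^T).
Proof. by rewrite /ct map_trmx. Qed.

Lemma psd_herm (A : 'M[C]_N) : psd A -> A \is hermsymmx.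
Proof.
move=> pA; apply/is_hermitianmxP; rewrite expr0 scale1r.
by rewrite -ct_tstar herm_mx.
Qed.

Lemma psd_bound (rho sig : 'M[C]_N) : psd rho -> psd sig -> (rho <= sig)%MS ->
  exists c, 0 <= c /\ forall v, fm rho v v <= c * fm sig v v.
Proof.
move=> prho psig rs.
have hrho := psd_herm prho.
set P := spectralmx rho; set d := spectral_diag rho.
have Pu : P \is unitarymx by apply: spectral_unitarymx.
have Hrho : rho = ct P *m diag_mx d *m P.
  have := @orthomx_spectralP C N rho; rewrite /= => /(_ (hermitian_normalmx hrho)) => E.
  by rewrite {1}E invmx_unitary // ct_tstar.
have PP : P *m ct P = 1%:M by rewrite ct_tstar; apply/unitarymxP.
have dreal : forall k, d 0 k \is Num.real.
  by move=> k; have /mxOverP := hermitian_spectral_diag_real hrho; apply.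
pose yk k (v : 'rV[C]_N) := (v *m ct (row k P)) 0 0.
have Hf : forall v, fm rho v v = \sum_k d 0 k * (yk k v * (yk k v)^*).
  move=> v; rewrite /fm Hrho !mulmxA.
  have -> : v *m ct P *m diag_mx d *m P *m ct v =
            (v *m ct P) *m diag_mx d *m ct (v *m ct P).
    by rewrite ct_mul ctK !mulmxA.
  rewrite mxE; apply: eq_bigr => k _.
  rewrite mul_mx_diag !mxE.
  have -> : yk k v = \sum_j v 0 j * ct P j k.
    by rewrite /yk !mxE; apply: eq_bigr => j _; rewrite !mxE.
  by rewrite mulrAC mulrC.
have Hk : forall k, exists ck, 0 <= ck /\ forall v,
    d 0 k * (yk k v * (yk k v)^*) <= ck * fm sig v v.
  move=> k; have := dreal k; rewrite realE => /orP[dk0|dk0]; last first.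
    exists 0; split => // v; rewrite mul0r mulr_le0_ge0 //.
    by rewrite -normCK exprn_ge0 ?normr_ge0.
  have [dz|dnz] := eqVneq (d 0 k) 0.
    by exists 0; split => // v; rewrite dz !mul0r.
  have uP : row k P *m ct P = delta_mx 0 k by rewrite -row_mul PP row1.
  have urho : row k P *m rho = d 0 k *: row k P.
    rewrite Hrho !mulmxA uP -rowE row_diag_mx -scalemxAl -rowE //.
  have us : (row k P <= sig)%MS.
    apply: submx_trans rs.
    have -> : row k P = (d 0 k)^-1 *: (row k P *m rho).
      by rewrite urho scalerA mulVf // scale1r.
    by apply/scalemx_sub/submxMl.
  have [Y HY] := submxP us.
  exists (d 0 k * fm sig Y Y); split.
    by rewrite mulr_ge0 //; apply: psig.
  move=> v.
  have -> : yk k v = fm sig v Y.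
    by rewrite /yk HY /fm ct_mulherm // mulmxA.
  rewrite -normCK -mulrA [fm sig Y Y * _]mulrC.
  by apply: ler_wpM2l => //; apply: CS.
have [c Hc] := fin_all_exists Hk.
exists (\sum_k c k); split.
  by apply: sumr_ge0 => k _; case: (Hc k).
move=> v; rewrite Hf mulr_suml; apply: ler_sum => k _.
by case: (Hc k) => _; apply.
Qed.

Lemma row_in_supp (A : 'M[C]_N) i : row i A \in supp A.
Proof. by rewrite memvE; apply: (sumv_sup i) => //; rewrite -memvE memv_line. Qed.

Lemma supp_subMS (A B : 'M[C]_N) : (A <= B)%MS -> (supp A <= supp B)%VS.
Proof.
move=> /submxP [D ->]; apply/subv_sumP => i _; rewrite -memvE.
rewrite row_mul mulmx_sum_row; apply: rpred_sum => k _.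
by apply: rpredZ; apply: row_in_supp.
Qed.

Lemma supp_mem (A : 'M[C]_N) v : v \in supp A -> (v <= A)%MS.
Proof.
move=> /memv_sumP [vs Hvs ->]; apply: summx_sub => i _.
have /vlineP [k ->] := Hvs i isT.
by apply/scalemx_sub/row_sub.
Qed.

Lemma supp_le (A B : 'M[C]_N) : (supp A <= supp B)%VS -> (A <= B)%MS.
Proof.
move=> /subvP H; apply/row_subP => i; apply: supp_mem; apply: H.
exact: row_in_supp.
Qed.

Lemma col_mulmx m p (A : 'M[C]_(m,N)) (B : 'M[C]_(N,p)) j : col j (A *m B) = A *m col j B.
Proof. by rewrite !colE mulmxA. Qed.

Lemma kernel_sub (A M : 'M[C]_N) : psd A ->
  (forall z : 'rV[C]_N, fm M z z = 0 -> fm A z z = 0) -> (A <= M)%MS.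
Proof.
move=> pA H; rewrite submxE; apply/eqP.
set K := cokermx M.
have MK : M *m K = 0 by apply: mulmx_coker.
apply/matrixP => i j.
have -> : (A *m K) i j = col j (A *m K) i 0 by rewrite !mxE.
rewrite col_mulmx.
suff -> : A *m col j K = 0 by rewrite !mxE.
have MKj : M *m col j K = 0 by rewrite -col_mulmx MK; apply/matrixP=> a b; rewrite !mxE.
have := @fm_kernel A (ct (col j K)) pA; rewrite ctK; apply; apply: H.
by rewrite /fm ctK -mulmxA MKj mulmx0 mxE.
Qed.

Lemma tr_sum k (F : 'I_k -> 'M[C]_N) : \tr (\sum_(i < k) F i) = \sum_(i < k) \tr (F i).
Proof.
elim/big_rec2: _ => [|i y1 y2 _ <-]; first by rewrite mxtrace0.
by rewrite mxtraceD.
Qed.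
End LA.

Section Main.
Variables (C : numClosedFieldType) (n : nat).
Local Notation D := (dens C n).
Local Open Scope classical_set_scope.

Definition Ssum (s : seq D) : {vspace 'rV[C]_(dimV n)} :=
  (\sum_(r <- s) supp (sval r))%VS.

Lemma Ssum_least (s : seq D) Q :
  (forall r, List.In r s -> (supp (sval r) <= Q)%VS) -> (Ssum s <= Q)%VS.
Proof.
elim: s => [|r s IH] H; first by rewrite /Ssum big_nil sub0v.
rewrite /Ssum big_cons subv_add; apply/andP; split; first by apply: H; left.
by apply: IH => r' Hr'; apply: H; right.
Qed.

Lemma exists_gen (R : set D) : exists s : seq D,
  (forall r, List.In r s -> R r) /\ (forall r, R r -> (supp (sval r) <= Ssum s)%VS).
Proof.
pose P m := `[< exists s : seq D, (forall r, List.In r s -> R r) /\ \dim (Ssum s) = m >].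
have P0 : exists m, P m.
  by exists 0%N; apply/asboolP; exists [::]; split => //; rewrite /Ssum big_nil dimv0.
have Pub : forall m, P m -> (m <= \dim (fullv : {vspace 'rV[C]_(dimV n)}))%N.
  by move=> m /asboolP [s [_ <-]]; apply: dimvS; apply: subvf.
case: (ex_maxnP P0 Pub) => m /asboolP [s [Hs Hd]] Hmax.
exists s; split => // r Rr.
apply/negPn/negP => Hn.
have : P (\dim (Ssum (r :: s))).
  apply/asboolP; exists (r :: s); split => // r' [<-|Hr']; first by [].
  by apply: Hs.
move/Hmax.
have : (\dim (Ssum s) < \dim (Ssum (r :: s)))%N.
  rewrite {2}/Ssum big_cons -/(Ssum s).
  rewrite (ltn_leqif (dimv_leqif_eq (addvSr _ _))).
  by apply: contra Hn => /eqP ->; rewrite addvSl.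
by rewrite Hd; case: leqP.
Qed.

Lemma alpha_s_lub (R : set D) :
  (forall r, R r -> (supp (sval r) <= alpha_s R)%VS) /\
  (forall Q, (forall r, R r -> (supp (sval r) <= Q)%VS) -> (alpha_s R <= Q)%VS).
Proof.
pose S := [set P : {vspace 'rV[C]_(dimV n)} |
  (forall r, R r -> (supp (sval r) <= P)%VS) /\
  (forall Q, (forall r, R r -> (supp (sval r) <= Q)%VS) -> (P <= Q)%VS)].
have ex : exists P, S P.
  have [s [Hs Hub]] := exists_gen R.
  exists (Ssum s); split => // Q HQ; apply: Ssum_least => r Hr; apply: HQ; exact: Hs.
case: (xgetPex 0%VS ex) => H1 H2; split; [exact: H1 | exact: H2].
Qed.

Lemma alpha_s_gamma (R : set D) : alpha_s (gamma_s (alpha_s R)) = alpha_s R.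
Proof.
have [ub1 le1] := alpha_s_lub R.
have [ub2 le2] := alpha_s_lub (gamma_s (alpha_s R)).
apply/eqP; rewrite eqEsubv; apply/andP; split.
  by apply: le2 => r.
by apply: le1 => r Rr; apply: ub2; apply: ub1.
Qed.


Lemma nth_In_seq (T : Type) (x0 : T) (s : seq T) i : (i < size s)%N -> List.In (nth x0 s i) s.
Proof. by elim: s i => [|a s IH] [|i] //= H; [left | right; apply: IH]. Qed.

Lemma In_nth_ord (T : Type) (x0 : T) (s : seq T) r :
  List.In r s -> exists i : 'I_(size s), nth x0 s i = r.
Proof.
elim: s => [|a s IH] //= [<-|H]; first by exists ord0.
have [i Hi] := IH H; exists (Ordinal (ltn_ord i : (i.+1 < (size s).+1)%N)) => //.
Qed.

Lemma key (A : Type) (le : A -> A -> Prop) (sup : set A -> A)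
  (alpha : set D -> A) (gamma : A -> set D) :
  well_structured le sup alpha gamma ->
  forall (R : set D) (rho : D), (supp (sval rho) <= alpha_s R)%VS ->
  le (alpha [set rho]) (alpha R).
Proof.
case=> [[refl anti trans supub suple] [[mono gmono gal emb] condb]] R rho Hrho.
have [s [Hs Hub]] := exists_gen R.
have [ub1 le1] := alpha_s_lub R.
have HS : (supp (sval rho) <= Ssum s)%VS := subv_trans Hrho (le1 _ Hub).
set k := size s.
pose rh (i : 'I_k) := nth rho s i.
have Rrh : forall i, R (rh i) by move=> i; apply: Hs; apply: nth_In_seq.
pose x : C := (k%:R + 1)^-1.
have x0 : 0 < x by rewrite invr_gt0 ltr_pwDr.
have pM : psd (\sum_(i < k) x *: sval (rh i)).
  apply: psd_sum => i; apply: psdZ; first exact: ltW.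
  by case: (svalP (rh i)).
have tM : \tr (\sum_(i < k) x *: sval (rh i)) <= 1.
  rewrite tr_sum; apply: (@le_trans _ _ (\sum_(i < k) x)).
    apply: ler_sum => i _; rewrite mxtraceZ -[leRHS]mulr1.
    by apply: ler_wpM2l; [exact: ltW | case: (svalP (rh i))].
  rewrite sumr_const card_ord -mulr_natl /x ler_pdivrMr ?mul1r ?lerDl //.
  by rewrite ltr_pwDr.
set M := \sum_(i < k) x *: sval (rh i) in pM tM.
pose sig : D := exist _ M (conj pM tM).
have Hb1 := condb k rh (fun=> x) sig (fun=> x0) erefl.
have Hsig_le : le (alpha [set sig]) (alpha R).
  rewrite Hb1; apply: suple => a [i _ <-]; apply: mono => r' /= ->; exact: Rrh.
have Hsub : forall i, (sval (rh i) <= M)%MS.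
  move=> i; apply: kernel_sub; first by case: (svalP (rh i)).
  move=> z Hz.
  have Hnn : forall j : 'I_k, true -> 0 <= fm (x *: sval (rh j)) z z.
    by move=> j _; apply: (psdZ (ltW x0)); case: (svalP (rh j)).
  have := psumr_eq0P Hnn; rewrite -fm_sum => /(_ Hz i isT).
  by rewrite fmZm => /eqP; rewrite mulf_eq0 (gt_eqF x0) /= => /eqP.
have HSM : (Ssum s <= supp M)%VS.
  apply: Ssum_least => r Hr; have [i <-] := In_nth_ord rho Hr.
  exact: supp_subMS (Hsub i).
have HrM : (sval rho <= M)%MS by apply: supp_le; apply: subv_trans HS HSM.
have prho : psd (sval rho) by case: (svalP rho).
have [c [c0 Hc]] := psd_bound prho pM HrM.
pose e : C := (c + 1)^-1.
have c1 : 0 < c + 1 by rewrite ltr_pwDr.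
have e0 : 0 < e by rewrite invr_gt0.
have ec : e * c <= 1 by rewrite mulrC ler_pdivrMr // mul1r lerDl.
pose T := M - e *: sval rho.
have pT : psd T.
  move=> v; rewrite -/(fm _ _ _) /T fmDm fmNm fmZm subr_ge0.
  apply: (le_trans (ler_wpM2l (ltW e0) (Hc v))); rewrite mulrA.
  have hv : 0 <= fm M v v by apply: pM.
  by rewrite -[leRHS]mul1r ler_wpM2r.
have tT : \tr T <= 1.
  rewrite /T mxtraceD -scaleNr mxtraceZ; refine (le_trans _ tM).
  rewrite gerDl mulNr oppr_le0 mulr_ge0 ?(ltW e0) //.
  by apply: psd_tr.
pose tau : D := exist _ T (conj pT tT).
pose rh2 (i : 'I_2) := if i == ord0 then rho else tau.
pose x2 (i : 'I_2) : C := if i == ord0 then e else 1.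
have Hb2 : alpha [set sig] = sup [set alpha [set rh2 i] | i in setT].
  apply: (condb 2 rh2 x2 sig).
    by move=> i; rewrite /x2; case: ifP => _; [exact: e0 | exact: ltr01].
  rewrite !big_ord_recr big_ord0 /= /x2 /rh2 /=.
  by rewrite add0r scale1r /T addrC subrK.
have Hrs : le (alpha [set rho]) (alpha [set sig]).
  by rewrite Hb2; apply: supub; exists ord0.
exact: trans Hrs Hsig_le.
Qed.

End Main.

Theorem mainTheorem2 (C : numClosedFieldType) (n : nat) (A : Type)
  (le : A -> A -> Prop) (sup : set A -> A)
  (alpha : set (dens C n) -> A) (gamma : A -> set (dens C n)) :
  well_structured le sup alpha gamma ->
  (forall R1 R2 : set (dens C n), alpha_s R1 = alpha_s R2 -> alpha R1 = alpha R2)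
  /\ (forall R : set (dens C n), alpha R = alpha (gamma_s (alpha_s R))).
Proof.
move=> WS; have K := key WS.
case: WS => [[refl anti trans supub suple] [[mono gmono gal emb] condb]].
have P1 : forall R1 R2 : set (dens C n), alpha_s R1 = alpha_s R2 -> le (alpha R1) (alpha R2).
  move=> R1 R2 E; apply: (proj1 (gal _ _)) => r Rr.
  have : le (alpha [set r]) (alpha R2).
    apply: K; rewrite -E; exact: (alpha_s_lub R1).1 _ Rr.
  by move/(proj2 (gal _ _)); apply.
split.
  by move=> R1 R2 E; apply: anti; apply: P1; rewrite E.
by move=> R; apply: anti; apply: P1; rewrite alpha_s_gamma.
Qed.
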